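(* The subspace $K[I[\infty]]$ of $K[\mathcal{T}[\infty]]$ spanned by increasing trees is a graded Hopf subalgebra of $(K[\mathcal{T}[\infty]],\star,\Delta_{\mathrm s})$: it contains the unit, is closed under $\star$, and $\Delta_{\mathrm s}(K[I[\infty]])\subseteq K[I[\infty]]\otimes K[I[\infty]]$.
   Context: $K$ is a field. A tree is a finite planar rooted tree, degree = number of non-root nodes, $\odot$ the one-node tree. An $n$--tree is a tree of degree $n$ whose non-root nodes are labelled bijectively by $\{1,\dots,n\}$; $\mathcal{T}[\infty]$ is the set of all $n$--trees. An increasing tree is an $n$--tree in which labels strictly increase along every path starting at the root; $I[\infty]$ is the set of increasing trees. Nodes $N(t)$ are ordered by depth-first post-order (subtrees left to right recursively, then the node; root maximal); write $u_1<\dots<u_n$ for non-root nodes. For a set $A$ of non-root nodes, $t_A$ is obtained by deleting non-root nodes outside $A$ (children attached in order to the parent in place of the deleted node), labels kept; $t_{[i,j]}=t_{\{u_h,\dots,u_k\}}$ if $i\le j$ and $[i,j]\cap[n]=[h,k]\ne\emptyset$, else $\odot$. Standardization $\mathrm s(t)$ of an $\mathbb N$-labelled tree with distinct labels relabels by $1,\dots,|t|$ preserving relative order. $\Delta_{\mathrm s}(t)=\sum_{k=0}^n\mathrm s(t_{[1,k]})\otimes\mathrm s(t_{[k+1,n]})$. $w[m]$ adds $m$ to every label. A partition of $u$ of degree $n\ge1$ is an ordered tuple $(u_{[n_0+1,n_1]},\dots,u_{[n_{k-1}+1,n_k]})$, $0=n_0<\dots<n_k=n$; for $P=(u_1,\dots,u_k)$,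 $I(P,t)$ is the set of maps $f$ from blocks to $N(t)$ with $f(u_1)<\dots<f(u_k)$; $t\#_{P,f}u$ identifies the root of each $u_i$ with $f(u_i)$, the root-children of $u_i$ becoming children of $f(u_i)$ to the right of its original children, labels kept; $t* u=\sum_{P,f}t\#_{P,f}u$ ($|u|\ge1$), $t*\odot=t$; $t\star w=t* w[|t|]$. *)

(* Defs.v *)
From HB Require Import structures.
From mathcomp Require Import all_boot all_order all_algebra.
Set Implicit Arguments. Unset Strict Implicit. Unset Printing Implicit Defensive.
Import GRing.Theory.
Local Open Scope ring_scope.

(* A tree (with its unlabelled root) is represented by the ordered forest   *)
(* [ptree := seq ltree] of the root's children; the one-node tree is [::].  *)
Inductive ltree := LNode of nat & seq ltree.

Fixpoint ltree_enc (t : ltree) : GenTree.tree nat :=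
  let: LNode l ts := t in GenTree.Node l (map ltree_enc ts).
Fixpoint ltree_dec (g : GenTree.tree nat) : ltree :=
  match g with
  | GenTree.Leaf _ => LNode 0 [::]
  | GenTree.Node l gs => LNode l (map ltree_dec gs)
  end.
Fixpoint ltree_encK (t : ltree) : ltree_dec (ltree_enc t) = t :=
  match t return ltree_dec (ltree_enc t) = t with
  | LNode l ts =>
      f_equal (LNode l)
        ((fix F (s : seq ltree) : map ltree_dec (map ltree_enc s) = s :=
            match s return map ltree_dec (map ltree_enc s) = s with
            | [::] => erefl
            | t1 :: s1 => f_equal2 cons (ltree_encK t1) (F s1)
            end) ts)
  end.
HB.instance Definition _ := Equality.copy ltree (can_type ltree_encK).

Definition ptree := seq ltree.

Fixpoint post (t : ltree) : seq nat :=
  let: LNode l ts := t in flatten (map post ts) ++ [:: l].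
(* labels of the non-root nodes u_1 < ... < u_n in post-order *)
Definition labels (t : ptree) : seq nat := flatten (map post t).
Definition degree (t : ptree) : nat := size (labels t).

Definition is_ntree (t : ptree) : bool := perm_eq (labels t) (iota 1 (degree t)).

Definition label (t : ltree) : nat := let: LNode l _ := t in l.
(* labels strictly increase along every edge (hence along every path from  *)
(* the root; the root is unlabelled)                                        *)
Fixpoint incr_node (t : ltree) : bool :=
  let: LNode l ts := t in all (fun c => l < label c)%N ts && all incr_node ts.
Definition is_increasing (t : ptree) : bool := is_ntree t && all incr_node t.

Fixpoint relab (g : nat -> nat) (t : ltree) : ltree :=
  let: LNode l ts := t in LNode (g l) (map (relab g) ts).
Definition prelab (g : nat -> nat) (t : ptree) : ptree := map (relab g) t.

Definition shift (m : nat) (t : ptree) : ptree := prelab (addn m) t.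

Definition std (t : ptree) : ptree :=
  prelab (fun l => count (fun m => m <= l)%N (labels t)) t.

Fixpoint restr_node (A : pred nat) (t : ltree) : seq ltree :=
  let: LNode l ts := t in
  let fs := flatten (map (restr_node A) ts) in
  if A l then [:: LNode l fs] else fs.
Definition restr (A : pred nat) (t : ptree) : ptree :=
  flatten (map (restr_node A) t).

(* t_[i,j]: keep the nodes u_p with i <= p <= j (p = post-order position, *)
(* 1-based); labels of an n-tree are distinct so nodes are determined by  *)
(* their labels. Empty intersection (or i > j) gives the one-node tree.   *)
Definition interval (t : ptree) (i j : nat) : ptree :=
  restr (fun l => (i <= (index l (labels t)).+1 <= j)%N) t.

(* grafting: g gives, for each node (by label), the forest to be appended *)
(* to the right of its children; groot for the root.                       *)
Fixpoint graft_node (g : nat -> seq ltree) (t : ltree) : ltree :=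
  let: LNode l ts := t in LNode l (map (graft_node g) ts ++ g l).
Definition graft (g : nat -> seq ltree) (groot : seq ltree) (t : ptree) : ptree :=
  map (graft_node g) t ++ groot.

Fixpoint ksub (s : seq nat) (k : nat) : seq (seq nat) :=
  match s with
  | [::] => if k is 0 then [:: [::]] else [::]
  | x :: s' => if k is k'.+1 then map (cons x) (ksub s' k') ++ ksub s' k
               else [:: [::]]
  end.
Definition subsets (s : seq nat) : seq (seq nat) :=
  flatten [seq ksub s j | j <- iota 0 (size s).+1].

(* The blocks of the partition of u with cut points C (sorted subset of   *)
(* {1,..,n-1}): boundaries 0 = n_0 < n_1 < ... < n_k = n.                *)
Definition blocks (u : ptree) (C : seq nat) : seq ptree :=
  let bs := 0%N :: rcons C (degree u) in
  [seq interval u p.1.+1 p.2 | p <- zip bs (behead bs)].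

(* t #_{P,f} u, with f given by the increasing list F of post-order        *)
(* positions (0-based; the root has position degree t) of nodes of t.      *)
Definition graft_blocks (t : ptree) (bl : seq ptree) (F : seq nat) : ptree :=
  let at_pos p := if p \in F then nth [::] bl (index p F) else [::] in
  graft (fun l => at_pos (index l (labels t))) (at_pos (degree t)) t.

(* t * u as a list of trees (the formal sum, multiplicities included) *)
Definition grafts (t u : ptree) : seq ptree :=
  if degree u == 0%N then [:: t] else
  flatten [seq [seq graft_blocks t (blocks u C) F
               | F <- ksub (iota 0 (degree t).+1) (size C).+1]
          | C <- subsets (iota 1 (degree u).-1)].

Definition star_trees (t w : ptree) : seq ptree := grafts t (shift (degree t) w).

Definition coprod_tree (t : ptree) : seq (ptree * ptree) :=
  [seq (std (interval t 1 k), std (interval t k.+1 (degree t)))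
  | k <- iota 0 (degree t).+1].

(* K[T[oo]]: finite formal K-linear combinations of trees, represented by   *)
(* lists of (coefficient, tree); K[T]⊗K[T] has basis the pairs of trees.   *)
Section Linear.
Variable K : fieldType.

Definition fsum (T : eqType) := seq (K * T).
Definition coef (T : eqType) (x : fsum T) (t : T) : K :=
  \sum_(p <- x | p.2 == t) p.1.

Definition star (x y : fsum ptree) : fsum ptree :=
  flatten [seq [seq (a.1 * b.1, s) | s <- star_trees a.2 b.2] | a <- x, b <- y].
Definition coprod (x : fsum ptree) : fsum (ptree * ptree)%type :=
  [seq (a.1, p) | a <- x, p <- coprod_tree a.2].

Definition unit_elt : fsum ptree := [:: (1, [::])].

Definition inKI (x : fsum ptree) : Prop :=
  forall t, coef x t != 0 -> is_increasing t.
Definition inKI2 (x : fsum (ptree * ptree)%type) : Prop :=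
  forall p, coef x p != 0 -> is_increasing p.1 /\ is_increasing p.2.
End Linear.

(* Main.v *)
Require Import Defs.
From HB Require Import structures.
From mathcomp Require Import all_boot all_order all_algebra.
From mathcomp Require Import zify.
Set Implicit Arguments. Unset Strict Implicit. Unset Printing Implicit Defensive.

Fixpoint ltree_ind2 (P : ltree -> Prop)
  (H : forall l ts, List.Forall P ts -> P (LNode l ts)) (t : ltree) : P t :=
  match t with
  | LNode l ts => H l ts ((fix F (s : seq ltree) : List.Forall P s :=
       match s with [::] => List.Forall_nil P
       | c :: s1 => List.Forall_cons c (ltree_ind2 H c) (F s1) end) ts)
  end.

Lemma ltree_ind3 (P : ltree -> Prop) :
  (forall l ts, (forall c, c \in ts -> P c) -> P (LNode l ts)) -> forall t, P t.
Proof.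
move=> H; apply: ltree_ind2 => l ts HF; apply: H => c.
elim: HF => [//|c1 s1 Pc1 _ IH]; rewrite in_cons => /orP[/eqP->//|]; exact: IH.
Qed.

Lemma labels_cat s1 s2 : labels (s1 ++ s2) = labels s1 ++ labels s2.
Proof. by rewrite /labels map_cat flatten_cat. Qed.
Lemma labels_cons c s : labels (c :: s) = post c ++ labels s.
Proof. by []. Qed.
Lemma labels_flatten (L : seq ptree) : labels (flatten L) = flatten (map labels L).
Proof. by elim: L => //= f L IH; rewrite labels_cat IH. Qed.

Lemma post_node l ts : post (LNode l ts) = labels ts ++ [:: l].
Proof. by []. Qed.

Lemma mem_labels x s : reflect (exists2 c, c \in s & x \in post c) (x \in labels s).
Proof.
apply: (iffP flattenP) => [[p /mapP[c cs ->] xp]|[c cs xp]]; first by exists c.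
by exists (post c) => //; apply: map_f.
Qed.

Lemma label_in_post c : label c \in post c.
Proof. by case: c => l ts; rewrite post_node mem_cat mem_seq1 eqxx orbT. Qed.

Lemma root_label d f : d \in f -> label d \in labels f.
Proof. by move=> df; apply/mem_labels; exists d => //; apply: label_in_post. Qed.

Lemma post_relab g c : post (relab g c) = map g (post c).
Proof.
elim/ltree_ind3: c => l ts IH /=.
rewrite map_cat /=; congr (_ ++ _).
elim: ts IH => //= c ts IHts IH; rewrite map_cat IH ?mem_head // IHts // => d dts.
by apply: IH; rewrite in_cons dts orbT.
Qed.
Lemma labels_prelab g t : labels (prelab g t) = map g (labels t).
Proof.
elim: t => // c t IH; rewrite /prelab /= labels_cons -/(prelab g t).
by rewrite IH post_relab labels_cons map_cat.
Qed.

Lemma labels_restr_node A c : labels (restr_node A c) = filter A (post c).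
Proof.
elim/ltree_ind3: c => l ts IH /=.
have E : labels (flatten [seq restr_node A i | i <- ts]) = filter A (labels ts).
  rewrite labels_flatten.
  elim: ts IH => //= c ts IHts IH; rewrite labels_cons filter_cat IH ?mem_head //.
  by rewrite IHts // => d dts; apply: IH; rewrite in_cons dts orbT.
rewrite filter_cat /=; case: (A l) => /=.
  by rewrite labels_cons post_node E /= cats0.
by rewrite cats0 E.
Qed.
Lemma labels_restr A t : labels (restr A t) = filter A (labels t).
Proof.
rewrite /restr labels_flatten; elim: t => //= c t IH.
by rewrite labels_cons filter_cat labels_restr_node IH.
Qed.

Lemma incr_post c : incr_node c -> forall x, x \in post c -> label c <= x.
Proof.
elim/ltree_ind3: c => l ts IH /= /andP[/allP Hl /allP Hi] x.
rewrite mem_cat mem_seq1 => /orP[/mem_labels[d dts xd]|/eqP->//].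
have := IH d dts (Hi d dts) x xd; have := Hl d dts; lia.
Qed.

Lemma incr_restr A c : incr_node c -> all incr_node (restr_node A c).
Proof.
elim/ltree_ind3: c => l ts IH Hc.
have Hc' := Hc; move: Hc' => /= /andP[/allP Hl /allP Hi].
have Hfs : all incr_node (flatten [seq restr_node A i | i <- ts]).
  apply/allP => d /flattenP[f /mapP[c cts ->] df].
  exact: (allP (IH c cts (Hi c cts))).
case: (A l) => //=; rewrite Hfs !andbT /=; apply/allP => d /flattenP[f /mapP[c cts ->] df].
have := root_label df; rewrite labels_restr_node mem_filter => /andP[_ ].
move/(incr_post (Hi c cts)); have := Hl c cts; lia.
Qed.

Lemma incr_restr_forest A t : all incr_node t -> all incr_node (restr A t).
Proof.
move=> /allP H; apply/allP => d /flattenP[f /mapP[c ct ->] df].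
exact: (allP (incr_restr A (H c ct))).
Qed.

Lemma label_relab g c : label (relab g c) = g (label c).
Proof. by case: c. Qed.

Lemma incr_relab g c :
  (forall x y, x \in post c -> y \in post c -> x < y -> g x < g y) ->
  incr_node c -> incr_node (relab g c).
Proof.
elim/ltree_ind3: c => l ts IH Hg /= /andP[/allP Hl /allP Hi].
have sub : forall d, d \in ts -> {subset post d <= post (LNode l ts)}.
  by move=> d dts x xd; rewrite post_node mem_cat; apply/orP; left; apply/mem_labels; exists d.
apply/andP; split; apply/allP => _ /mapP[d dts ->].
  rewrite label_relab; apply: Hg; last exact: Hl.
    by rewrite post_node mem_cat mem_seq1 eqxx orbT.
  exact: (sub d dts _ (label_in_post d)).
apply: IH => //; last exact: Hi.
by move=> x y xd yd; apply: Hg; apply: (sub d dts).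
Qed.

Lemma labels_graft_node g c :
  perm_eq (post (graft_node g c)) (post c ++ flatten (map (fun l => labels (g l)) (post c))).
Proof.
elim/ltree_ind3: c => l ts IH /=.
have E : perm_eq (labels (map (graft_node g) ts))
   (labels ts ++ flatten (map (fun l => labels (g l)) (labels ts))).
  elim: ts IH => //= c ts IHts IH.
  rewrite -[labels (graft_node g c :: _)]/(post (graft_node g c) ++ labels (map (graft_node g) ts)).
  rewrite labels_cons map_cat flatten_cat.
  have H1 := IH c (mem_head _ _).
  have H2 := IHts (fun d dts => IH d (@mem_behead _ (c :: ts) _ dts)).
  apply: perm_trans (perm_cat H1 H2) _.
  by rewrite -!catA perm_cat2l perm_catCA perm_refl.
change (perm_eq (labels (map (graft_node g) ts ++ g l) ++ [:: l])
  ((labels ts ++ [:: l]) ++ flatten (map (fun l => labels (g l)) (labels ts ++ [:: l])))).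
rewrite labels_cat map_cat flatten_cat /= cats0 -!catA.
apply: perm_trans (perm_cat E (perm_refl (labels (g l) ++ [:: l]))) _.
rewrite -!catA perm_cat2l.
by rewrite perm_sym perm_catC -!catA perm_refl.
Qed.

Lemma labels_graft g gr t :
  perm_eq (labels (graft g gr t))
    (labels t ++ flatten (map (fun l => labels (g l)) (labels t)) ++ labels gr).
Proof.
rewrite /graft labels_cat catA perm_cat2r.
elim: t => //= c t IH.
rewrite -[labels (graft_node g c :: _)]/(post (graft_node g c) ++ labels (map (graft_node g) t)).
rewrite labels_cons map_cat flatten_cat.
apply: perm_trans (perm_cat (labels_graft_node g c) IH) _.
by rewrite -!catA perm_cat2l perm_catCA.
Qed.

Lemma incr_graft g c :
  (forall l, l \in post c -> all (fun d => l < label d) (g l) && all incr_node (g l)) ->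
  incr_node c -> incr_node (graft_node g c).
Proof.
elim/ltree_ind3: c => l ts IH Hg /= /andP[/allP Hl /allP Hi].
have sub : forall d, d \in ts -> {subset post d <= post (LNode l ts)}.
  by move=> d dts x xd; rewrite post_node mem_cat; apply/orP; left; apply/mem_labels; exists d.
have := Hg l; rewrite post_node mem_cat mem_seq1 eqxx orbT => /(_ isT) /andP[H1 H2].
rewrite !all_cat H1 H2 !andbT; apply/andP; split; apply/allP => _ /mapP[d dts ->].
  by case: d dts => l' ts' /Hl.
apply: IH => //; last exact: Hi.
by move=> x xd; apply: Hg; apply: (sub d dts).
Qed.


Lemma ksubP s k c : c \in ksub s k -> subseq c s /\ size c = k.
Proof.
elim: s k c => [|x s IH] [|k] c /=; rewrite ?mem_seq1 ?in_nil //.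
- by move/eqP->.
- by move/eqP->; split; rewrite ?sub0seq.
rewrite mem_cat => /orP[/mapP[c' /IH[h1 h2] ->]|/IH[h1 h2]].
  by rewrite /= eqxx h1 h2.
by split=> //; apply: subseq_trans h1 (subseq_cons _ _).
Qed.

Lemma subsetsP s c : c \in subsets s -> subseq c s.
Proof. by move=> /flattenP[L /mapP[j _ ->] /ksubP[]]. Qed.

Lemma index_map_uniq (s : seq nat) : uniq s -> map (fun x => index x s) s = iota 0 (size s).
Proof.
elim: s => //= x s IH /andP[xs us]; rewrite eqxx; congr (_ :: _).
rewrite (iotaDl 1 0) -IH // -map_comp. apply/eq_in_map => y ys /=.
by case: eqP => // exy; rewrite exy ys in xs.
Qed.

Definition atp (bl : seq ptree) (F : seq nat) (p : nat) : ptree :=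
  if p \in F then nth [::] bl (index p F) else [::].

Lemma atp_flatten s F bl : uniq s -> subseq F s -> size bl = size F ->
  flatten [seq labels (atp bl F p) | p <- s] = flatten (map labels bl).
Proof.
elim: s F bl => [|x s IH] F bl.
  by move=> _ /eqP-> /=; case: bl.
move=> /= /andP[xs us]; case: F => [|y F] /=.
  move=> _; case: bl => //= _.
  by rewrite (IH [::] [::]) ?sub0seq.
case: eqP => [exy|nyx] sF.
  subst y; case: bl => //= b bl [sb].
  rewrite {1}/atp in_cons eqxx /= eqxx /= -(IH F bl) //.
  congr (_ ++ _); congr flatten; apply/eq_in_map => p ps /=.
  have xp : x != p by apply/negP => /eqP epx; rewrite epx ps in xs.
  by rewrite /atp in_cons eq_sym (negPf xp) /= (negPf xp).
move=> sb; have xF : x \in y :: F = false.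
  by apply/negP => /(mem_subseq sF); rewrite (negPf xs).
by rewrite {1}/atp xF /= (IH (y :: F) bl).
Qed.

Lemma path_last_le x r : path leq x r -> x <= last x r.
Proof.
elim: r x => //= y r IH x /andP[xy /IH]; exact: leq_trans.
Qed.

Lemma sum_intervals q x r : path leq x r ->
  \sum_(pr <- zip (x :: r) r) (pr.1 <= q < pr.2 : nat) = (x <= q < last x r).
Proof.
elim: r x => [|y r IH] x /=.
  by rewrite big_nil; case: leqP => //; rewrite ltnNge => ->.
move=> /andP[xy pr]; rewrite big_cons IH //= .
have := path_last_le pr; lia.
Qed.

Lemma nth_prop (T : eqType) (P : T -> Prop) (d : T) (s : seq T) i :
  (forall b, b \in s -> P b) -> P d -> P (nth d s i).
Proof.
move=> H Pd; case: (ltnP i (size s)) => hi; first exact/H/mem_nth.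
by rewrite nth_default.
Qed.


Lemma sum_count (X : Type) (prs : seq X) (Q : X -> pred nat) (P : pred nat) s :
  (forall x, x \in s -> \sum_(pr <- prs) (Q pr x : nat) = 1) ->
  \sum_(pr <- prs) count (predI P (Q pr)) s = count P s.
Proof.
elim: s => [|x s IH] H /=; first by rewrite big1.
rewrite big_split /= IH; last by move=> y ys; apply: H; rewrite in_cons ys orbT.
congr (_ + _); case: (P x) => /=; first by apply: H; rewrite mem_head.
by rewrite big1.
Qed.

Lemma blocks_perm u C : uniq (labels u) -> C \in subsets (iota 1 (degree u).-1) ->
  perm_eq (flatten (map labels (blocks u C))) (labels u).
Proof.
set s := labels u => us /subsetsP sC.
have sCi : sorted leq C by apply: subseq_sorted sC (iota_sorted _ _); exact: leq_trans.
have Cm : forall c, c \in C -> c <= degree u.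
  move=> c /(mem_subseq sC); rewrite mem_iota; lia.
have pth : path leq 0 (rcons C (degree u)).
  rewrite rcons_path; apply/andP; split; first by case: C sCi {sC Cm}.
  have := mem_last 0 C; rewrite in_cons => /orP[/eqP->//|/Cm //].
apply/permP => P; rewrite count_flatten /blocks -map_comp sumnE big_map.
rewrite big_map.
under eq_bigr => pr _ do rewrite /= /Defs.interval labels_restr count_filter.
apply: sum_count => x xs.
under eq_bigr => pr _ do rewrite ltnS.
rewrite /= sum_intervals // last_rcons -/s.
by rewrite /= index_mem xs.
Qed.

Lemma star_incr t w r : is_increasing t -> is_increasing w ->
  r \in star_trees t w -> is_increasing r.
Proof.
move=> /andP[nt it] /andP[nw iw].
set n := degree t; set u := shift n w.
have lu : labels u = map (addn n) (labels w) by rewrite labels_prelab.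
have du : degree u = degree w by rewrite /degree lu size_map.
have pu : perm_eq (labels u) (iota n.+1 (degree w)).
  by rewrite lu -addn1 iotaDl; apply: perm_map.
have uu : uniq (labels u) by rewrite (perm_uniq pu) iota_uniq.
have gtu : forall x, x \in labels u -> n < x by move=> x; rewrite (perm_mem pu) mem_iota; lia.
have iu : all incr_node u.
  apply/allP => _ /mapP[c cw ->]; apply: incr_relab (allP iw c cw) => x y _ _.
  by rewrite ltn_add2l.
have ltt : forall l, l \in labels t -> l <= n.
  by move=> l; rewrite (perm_mem nt) mem_iota; lia.
have ut : uniq (labels t) by rewrite (perm_uniq nt) iota_uniq.
rewrite /star_trees /grafts -/n -/u.
case: eqP => [_|m0]; first by rewrite mem_seq1 => /eqP->; apply/andP.
move=> /flattenP[L /mapP[C HC ->]] /mapP[F HF ->].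
set bl := blocks u C.
have Qbl : forall b, b \in bl -> all incr_node b && all (fun x => n < x) (labels b).
  move=> _ /mapP[pr _ ->]; rewrite /Defs.interval incr_restr_forest //= labels_restr.
  by apply/allP => x; rewrite mem_filter => /andP[_]; exact: gtu.
have Qatp : forall p, all incr_node (atp bl F p) && all (fun x => n < x) (labels (atp bl F p)).
  move=> p; rewrite /atp; case: (p \in F) => //.
  exact: (nth_prop (P := fun b => is_true (all incr_node b && all (fun x => n < x) (labels b)))).
have [sF szF] := ksubP HF.
have szbl : size bl = size F by rewrite szF size_map size_zip /= size_rcons; lia.
change (graft_blocks t bl F) with
  (graft (fun l => atp bl F (index l (labels t))) (atp bl F n) t).
have pl : perm_eq (labels (graft (fun l => atp bl F (index l (labels t))) (atp bl F n) t))
                  (labels t ++ labels u).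
  apply: perm_trans (labels_graft _ _ _) _; rewrite perm_cat2l.
  have -> : map (fun l => labels (atp bl F (index l (labels t)))) (labels t)
          = map (fun p => labels (atp bl F p)) (iota 0 n).
    by rewrite -(index_map_uniq ut) -map_comp.
  have E : flatten (map (fun p => labels (atp bl F p)) (iota 0 n.+1))
         = flatten (map (fun p => labels (atp bl F p)) (iota 0 n)) ++ labels (atp bl F n).
    by rewrite -addn1 iotaD map_cat flatten_cat /= cats0.
  rewrite -E atp_flatten ?iota_uniq //; exact: blocks_perm.
set rr := graft _ _ _ in pl *.
rewrite /is_increasing; apply/andP; split.
  rewrite /is_ntree /degree (perm_size pl) size_cat.
  apply: perm_trans pl _; rewrite iotaD; apply: perm_cat; first exact: nt.
  by rewrite add1n -[size (labels u)]/(degree u) du.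
rewrite /rr /graft all_cat; apply/andP; split; last by case/andP: (Qatp n).
apply/allP => _ /mapP[c ct ->]; apply: incr_graft (allP it c ct) => l lc.
have lt : l \in labels t by apply/mem_labels; exists c.
case/andP: (Qatp (index l (labels t))) => -> /allP H; rewrite andbT.
apply/allP => d /root_label /H hd; exact: leq_ltn_trans (ltt l lt) hd.
Qed.


Definition rank (s : seq nat) (x : nat) := count (fun m => m <= x) s.

Lemma rank_lt s x y : x < y -> y \in s -> rank s x < rank s y.
Proof.
rewrite /rank; elim: s => //= z s IH xy; rewrite in_cons => /orP[/eqP<-|ys].
  have -> : (y <= x) = false by apply/negbTE; rewrite -ltnNge.
  rewrite leqnn add0n add1n ltnS; apply: sub_count => m /= mx.
  exact: leq_trans mx (ltnW xy).
have := IH xy ys; have : (z <= x) <= (z <= y).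
  by case: (leqP z x) => // zx; rewrite (leq_trans zx (ltnW xy)).
lia.
Qed.

Lemma rank_perm s : uniq s -> perm_eq (map (rank s) s) (iota 1 (size s)).
Proof.
move=> us; have inj : {in s &, injective (rank s)}.
  move=> x y xs ys E; apply/eqP; case: (ltngtP x y) => // h.
    by have := rank_lt h ys; rewrite E ltnn.
  by have := rank_lt h xs; rewrite E ltnn.
have u1 : uniq (map (rank s) s) by rewrite map_inj_in_uniq.
have sub : {subset map (rank s) s <= iota 1 (size s)}.
  move=> _ /mapP[x xs ->]; rewrite mem_iota; apply/andP; split.
    by rewrite /rank -has_count; apply/hasP; exists x.
  rewrite /rank; have := count_size (fun m => m <= x) s => h; rewrite add1n ltnS; exact: h.
have hs : size (iota 1 (size s)) <= size (map (rank s) s) by rewrite size_iota size_map.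
have [_ E] := uniq_min_size u1 sub hs.
by apply: uniq_perm => //; rewrite iota_uniq.
Qed.

Lemma std_incr v : uniq (labels v) -> all incr_node v -> is_increasing (std v).
Proof.
move=> uv iv; rewrite /is_increasing /is_ntree /degree /std labels_prelab size_map.
apply/andP; split; first exact: rank_perm.
apply/allP => _ /mapP[c cv ->]; apply: incr_relab (allP iv c cv) => x y xc yc xy.
apply: rank_lt xy _; apply/mem_labels; exists c => //.
Qed.

Lemma coprod_incr t p : is_increasing t -> p \in coprod_tree t ->
  is_increasing p.1 /\ is_increasing p.2.
Proof.
move=> /andP[nt it] /mapP[k _ ->] /=.
have ut : uniq (labels t) by rewrite (perm_uniq nt) iota_uniq.
split; apply: std_incr; rewrite /Defs.interval ?labels_restr ?filter_uniq //;
  exact: incr_restr_forest.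
Qed.

Import GRing.Theory.

Section Lin.
Variable K : fieldType.
Local Open Scope ring_scope.

Lemma coef_cons (T : eqType) (a : K * T) (x : fsum K T) t :
  coef (a :: x) t = (if a.2 == t then a.1 else 0) + coef x t.
Proof. by rewrite /coef big_cons; case: ifP; rewrite ?add0r. Qed.

Lemma group_sum (T : eqType) (x : fsum K T) (h : T -> K) (r : seq T) :
  uniq r -> (forall a, a \in x -> a.2 \in r) ->
  \sum_(a <- x) a.1 * h a.2 = \sum_(t <- r) coef x t * h t.
Proof.
elim: x => [|a x IH] ur H.
  by rewrite big_nil big1 // => t _; rewrite /coef big_nil mul0r.
rewrite big_cons IH //; last by move=> b bx; apply: H; rewrite in_cons bx orbT.
rewrite [in RHS](eq_bigr (fun t => (if a.2 == t then a.1 else 0) * h t + coef x t * h t));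
  last by move=> t _; rewrite coef_cons mulrDl.
rewrite big_split /=; congr (_ + _).
rewrite (bigD1_seq a.2) ?H ?mem_head //= eqxx big1 ?addr0 // => t nt.
by rewrite eq_sym (negPf nt) mul0r.
Qed.

Lemma support (T : eqType) (x : fsum K T) (h : T -> K) :
  \sum_(a <- x) a.1 * h a.2 != 0 -> exists t, coef x t != 0 /\ h t != 0.
Proof.
have mx : forall a, a \in x -> a.2 \in undup (map snd x).
  by move=> a ax; rewrite mem_undup; apply: map_f.
rewrite (@group_sum _ _ _ (undup (map snd x)) (undup_uniq _) mx).
move=> H; have : has (fun t => coef x t * h t != 0) (undup (map snd x)).
  apply/negPn/negP => /hasPn Hn; move/eqP: H; apply; rewrite big1_seq //.
  by move=> t /andP[_ tr]; have := Hn t tr; move/negPn/eqP.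
by case/hasP => t _; rewrite mulf_eq0 negb_or => /andP[h1 h2]; exists t.
Qed.

Lemma sum_if_count (T : eqType) (L : seq T) (s : T) (c : K) :
  \sum_(q <- L) (if q == s then c else 0) = c * (count_mem s L)%:R.
Proof.
elim: L => [|q L IH]; first by rewrite big_nil mulr0.
rewrite big_cons IH /= natrD mulrDr; congr (_ + _).
by rewrite eq_sym; case: (s == q); rewrite ?mulr1 ?mulr0.
Qed.

Lemma cnt_mem (T : eqType) (L : seq T) (s : T) : (count_mem s L)%:R != 0 :> K -> s \in L.
Proof.
apply: contraR => /count_memPn ->; by rewrite eqxx.
Qed.

Lemma coef_star (x y : fsum K ptree) (s : ptree) : coef (star x y) s =
  \sum_(a <- x) a.1 * \sum_(b <- y) b.1 * (count_mem s (star_trees a.2 b.2))%:R.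
Proof.
rewrite /coef /star big_flatten big_flatten big_map.
apply: eq_bigr => a _; rewrite big_map big_distrr /=; apply: eq_bigr => b _.
rewrite big_map big_mkcond /= sum_if_count mulrA //.
Qed.

Lemma coef_coprod (x : fsum K ptree) (p : ptree * ptree) : coef (coprod x) p =
  \sum_(a <- x) a.1 * (count_mem p (coprod_tree a.2))%:R.
Proof.
rewrite /coef /coprod big_flatten big_map.
by apply: eq_bigr => a _; rewrite big_map big_mkcond /= sum_if_count.
Qed.
End Lin.

Theorem proposition4p4 (K : fieldType) :
  inKI (unit_elt K) /\
  (forall x y : fsum K ptree, inKI x -> inKI y -> inKI (star x y)) /\
  (forall x : fsum K ptree, inKI x -> inKI2 (coprod x)).
Proof.
split; [|split].
- move=> t; rewrite /coef big_cons big_nil /=.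
  case: (eqVneq t [::]) => [-> //|nt].
  by rewrite eqxx.
- move=> x y Hx Hy s; rewrite coef_star.
  move=> /(@support _ _ x (fun t => \sum_(b <- y) b.1 * (count_mem s (star_trees t b.2))%:R)%R).
  case=> t [ct].
  move=> /(@support _ _ y (fun t2 => (count_mem s (star_trees t t2))%:R)%R) [t2 [ct2 cs]].
  apply: star_incr (Hx t ct) (Hy t2 ct2) _; exact: (cnt_mem cs).
- move=> x Hx p; rewrite coef_coprod.
  move=> /(@support _ _ x (fun t => (count_mem p (coprod_tree t))%:R)%R) [t [ct cp]].
  exact: coprod_incr (Hx t ct) (cnt_mem cp).
Qed.
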